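(* Let $n\ge 4$ and $1\le k<\frac{n}{2}$ be integers and let $D$ be the diameter of $B(n,k)$. If $n\neq 2k+1$ then $D=2k+2$; if $n=2k+1$ then $D=2k+1$.
   Context: For integers $n\ge 4$ and $1\le k<\frac n2$, let $[n]=\{1,\dots,n\}$. The graph $B(n,k)$ has vertex set $V=\{v\subset[n] : |v|\in\{k,k+1\}\}$, and two vertices $v,w$ are adjacent iff $v\subset w$ or $w\subset v$. *)

(* Defs.v *)
From mathcomp Require Import all_boot.
Set Implicit Arguments. Unset Strict Implicit. Unset Printing Implicit Defensive.

Definition isVB (n k : nat) (A : {set 'I_n}) : bool :=
  (#|A| == k) || (#|A| == k.+1).

Definition adjB (n k : nat) (A B : {set 'I_n}) : bool :=
  [&& isVB k A, isVB k B & (A \proper B) || (B \proper A)].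

Definition within (n k : nat) (u v : {set 'I_n}) (m : nat) : Prop :=
  exists p : seq {set 'I_n}, [/\ path (@adjB n k) u p, last u p = v & size p <= m].

(* D is the diameter of B(n,k): D is the least m such that every pair of
   vertices is at distance at most m (i.e. the maximum pairwise distance). *)
Definition is_diameter (n k D : nat) : Prop :=
  forall m : nat,
    (forall u v : {set 'I_n}, isVB k u -> isVB k v -> within k u v m) <-> D <= m.

(* Main.v *)
Require Import Defs.
From mathcomp Require Import all_boot.
From mathcomp Require Import zify.
Set Implicit Arguments. Unset Strict Implicit.

Section B.
Variables (n k : nat).
Notation S := {set 'I_n}.

Definition dd (a b : S) := #|a :\: b| + #|b :\: a|.

Lemma cardD_tri (a b c : S) : #|a :\: c| <= #|a :\: b| + #|b :\: c|.
Proof.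
apply: leq_trans (leq_card_setU _ _).
apply: subset_leq_card; apply/subsetP => z; rewrite !inE.
by case: (z \in a); case: (z \in b); case: (z \in c).
Qed.

Lemma adj_dd (a b : S) : adjB k a b -> dd a b = 1.
Proof.
case/and3P => Ha Hb Hp.
wlog Hab : a b Ha Hb Hp / a \proper b.
  move=> W; case/orP: (Hp) => Hp'; first exact: (W a b).
  by rewrite /dd addnC; apply: (W b a) => //; rewrite orbC.
have Hs := proper_sub Hab; have Hc := proper_card Hab.
rewrite /dd; move: (Hs); rewrite -setD_eq0 => /eqP ->; rewrite cards0 add0n.
rewrite cardsDS //.
move: Ha Hb Hc; rewrite /isVB => /orP[] /eqP -> /orP[] /eqP ->; lia.
Qed.

Lemma path_lb (p : seq S) (u : S) : path (@adjB n k) u p -> dd u (last u p) <= size p.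
Proof.
elim: p u => [|x p IH] u /=.
  by move=> _; rewrite /dd setDv cards0.
case/andP => Hux Hp; have := IH _ Hp; have := @adj_dd u x Hux.
rewrite /dd => H1 H2.
have := cardD_tri u x (last x p); have := cardD_tri (last x p) x u.
lia.
Qed.

Lemma within_cons (u w v : S) m : adjB k u w -> within k w v m -> within k u v m.+1.
Proof. by move=> H [p [Hp Hl Hs]]; exists (w :: p); split => //=; rewrite H. Qed.

Lemma within_mono (u v : S) m m' : m <= m' -> within k u v m -> within k u v m'.
Proof. by move=> Hm [p [Hp Hl Hs]]; exists p; split => //; apply: leq_trans Hm. Qed.

Lemma within_refl (u : S) m : within k u u m.
Proof. by exists [::]. Qed.

Lemma cardDsym (u v : S) : #|u| = #|v| -> #|v :\: u| = #|u :\: v|.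
Proof. by move=> H; rewrite !cardsD H setIC. Qed.

Lemma L1 d : forall u v : S, #|u| = k -> #|v| = k -> #|u :\: v| <= d -> within k u v d.*2.
Proof.
elim: d => [|d IH] u v Hu Hv Hd.
  have: u == v.
    rewrite eqEcard Hu Hv leqnn andbT -setD_eq0 -cards_eq0; lia.
  by move/eqP => ->; apply: within_refl.
case: (boolP (u == v)) => [/eqP -> | Huv]; first exact: within_refl.
have Hpos : 0 < #|u :\: v|.
  rewrite lt0n cards_eq0 setD_eq0; apply: contra Huv => Hs.
  by rewrite eqEcard Hs Hu Hv leqnn.
have : 0 < #|v :\: u| by rewrite cardDsym ?Hu ?Hv.
move: Hpos => /card_gt0P [x]; rewrite inE => /andP [xv xu].
move=> /card_gt0P [y]; rewrite inE => /andP [yu yv].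
have Hw : #|y |: u| = k.+1 by rewrite cardsU1 yu Hu.
have xw : x \in y |: u by rewrite !inE xu orbT.
have Hu' : #|(y |: u) :\ x| = k.
  by move: (cardsD1 x (y |: u)); rewrite xw Hw => -[].
rewrite doubleS; apply: (@within_cons _ (y |: u)).
  by rewrite /adjB /isVB Hu Hw !eqxx /= properEcard subsetUr Hw Hu ltnSn !orbT.
apply: (@within_cons _ ((y |: u) :\ x)).
  by rewrite /adjB /isVB Hu' Hw !eqxx /= (properD1 xw) !orbT.
apply: IH => //.
have Hsub : ((y |: u) :\ x) :\: v \subset (u :\: v) :\ x.
  apply/subsetP => z; rewrite !inE.
  case: (z =P y) => [-> | _] /=; first by rewrite yv !andbF.
  by move=> /andP [-> /andP [-> ->]].
apply: leq_trans (subset_leq_card Hsub) _.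
have : x \in u :\: v by rewrite inE xu xv.
move=> xuv; move: (cardsD1 x (u :\: v)); rewrite xuv; lia.
Qed.


Lemma within_snoc (u w v : S) m : within k u w m -> adjB k w v -> within k u v m.+1.
Proof.
move=> [p [Hp Hl Hs]] H; exists (rcons p v); split.
- by rewrite rcons_path Hp Hl H.
- by rewrite last_rcons.
- by rewrite size_rcons.
Qed.

Lemma ex_sub (A : S) m : m <= #|A| -> exists B : S, B \subset A /\ #|B| = m.
Proof.
elim: m => [|m IH] Hm; first by exists set0; rewrite sub0set cards0.
have [B [HB HcB]] := IH (ltnW Hm).
have : 0 < #|A :\: B| by rewrite cardsDS // HcB subn_gt0.
move=> /card_gt0P [x]; rewrite inE => /andP [xB xA].
exists (x |: B); split; first by rewrite subUset sub1set xA HB.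
by rewrite cardsU1 xB HcB.
Qed.

Lemma adj_down (v : S) y : #|v| = k.+1 -> y \in v -> adjB k (v :\ y) v /\ #|v :\ y| = k.
Proof.
move=> Hv yv; have Hc : #|v :\ y| = k by move: (cardsD1 y v); rewrite yv Hv => -[].
by rewrite /adjB /isVB Hc Hv !eqxx /= (properD1 yv) !orbT.
Qed.

Lemma adj_down' (v : S) y : #|v| = k.+1 -> y \in v -> adjB k v (v :\ y).
Proof.
move=> Hv yv; have Hc : #|v :\ y| = k by move: (cardsD1 y v); rewrite yv Hv => -[].
by rewrite /adjB /isVB Hc Hv !eqxx /= (properD1 yv) !orbT.
Qed.

Definition D0 := if n == k.*2.+1 then k.*2.+1 else k.*2.+2.

Lemma ub (u v : S) : k.*2 < n -> isVB k u -> isVB k v -> within k u v D0.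
Proof.
move=> Hn; rewrite /isVB => /orP[] /eqP Hu /orP[] /eqP Hv.
- have Hd : #|u :\: v| <= k by rewrite -Hu subset_leq_card // subsetDl.
  apply: (within_mono _ (L1 Hu Hv Hd)).
  rewrite /D0; case: ifP => _; lia.
- have : 0 < #|v :\: u| by rewrite cardsD Hv; have := subset_leq_card (subsetIr v u); rewrite Hu; lia.
  move=> /card_gt0P [y]; rewrite inE => /andP [yu yv].
  have [Had Hc] := adj_down Hv yv.
  apply: (within_mono _ (within_snoc (L1 Hu Hc (leqnn _)) Had)).
  have Hd : #|u :\: (v :\ y)| <= k by rewrite -Hu subset_leq_card // subsetDl.
  rewrite /D0; case: ifP => _; lia.
- have : 0 < #|u :\: v| by rewrite cardsD Hu; have := subset_leq_card (subsetIr u v); rewrite Hv; lia.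
  move=> /card_gt0P [x]; rewrite inE => /andP [xv xu].
  have [_ Hc] := adj_down Hu xu.
  apply: (within_mono _ (within_cons (adj_down' Hu xu) (L1 Hc Hv (leqnn _)))).
  have Hd : #|(u :\ x) :\: v| <= k by rewrite -Hc subset_leq_card // subsetDl.
  rewrite /D0; case: ifP => _; lia.
- case: (boolP (u == v)) => [/eqP -> | Huv]; first exact: within_refl.
  have Hpos : 0 < #|u :\: v|.
    rewrite lt0n cards_eq0 setD_eq0; apply: contra Huv => Hs.
    by rewrite eqEcard Hs Hu Hv leqnn.
  have : 0 < #|v :\: u| by rewrite cardDsym ?Hu ?Hv.
  move: Hpos => /card_gt0P [x]; rewrite inE => /andP [xv xu].
  move=> /card_gt0P [y]; rewrite inE => /andP [yu yv].
  have [_ Hcu] := adj_down Hu xu; have [Hadv Hcv] := adj_down Hv yv.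
  have Hsub : (u :\ x) :\: (v :\ y) \subset (u :\: v) :\ x.
    apply/subsetP => z; rewrite !inE.
    case: (z =P y) => [-> | _] /=; first by rewrite (negbTE yu) !andbF.
    by move=> /andP [/negbTE -> /andP [-> ->]].
  have xuv : x \in u :\: v by rewrite inE xu xv.
  have Hd1 : #|(u :\ x) :\: (v :\ y)| < #|u :\: v|.
    have := subset_leq_card Hsub.
    by move: (cardsD1 x (u :\: v)); rewrite xuv; lia.
  have Hb1 : #|u :\: v| <= k.+1 by rewrite -Hu subset_leq_card // subsetDl.
  have Hb2 : n = k.*2.+1 -> #|u :\: v| <= k.
    move=> En; have : u :\: v \subset ~: v by rewrite setDE subsetIr.
    move/subset_leq_card; have := cardsC v; rewrite card_ord Hv; lia.
  apply: (within_mono _ (within_cons (adj_down' Hu xu)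
           (within_snoc (L1 Hcu Hcv (leqnn _)) Hadv))).
  rewrite /D0; case: ifP => [/eqP En | _].
  + have := Hb2 En; lia.
  + lia.
Qed.

Lemma lb : k.*2 < n -> exists u v : S, [/\ isVB k u, isVB k v & dd u v = D0].
Proof.
move=> Hn; rewrite /D0; case: ifP => [/eqP En | Hne].
- have [u [_ Hu]] : exists B : S, B \subset setT /\ #|B| = k.
    by apply: ex_sub; rewrite cardsT card_ord; lia.
  have Hc : #|~: u| = k.+1 by have := cardsC u; rewrite card_ord Hu; lia.
  exists u, (~: u); split; rewrite /isVB ?Hu ?Hc ?eqxx ?orbT //.
  rewrite /dd !setDE setCK !setIid Hu Hc; lia.
- have Hn2 : k.*2.+2 <= n by move/negbT: Hne; lia.
  have [u [_ Hu]] : exists B : S, B \subset setT /\ #|B| = k.+1.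
    by apply: ex_sub; rewrite cardsT card_ord; lia.
  have [v [Hvs Hv]] : exists B : S, B \subset ~: u /\ #|B| = k.+1.
    by apply: ex_sub; have := cardsC u; rewrite card_ord Hu; lia.
  have E1 : u :\: v = u.
    apply/setP => z; rewrite !inE; case Hz: (z \in v) => //=.
    by move/subsetP: Hvs => /(_ z Hz); rewrite inE => /negbTE ->.
  have E2 : v :\: u = v.
    apply/setP => z; rewrite !inE; case Hz: (z \in v); rewrite ?andbF ?andbT //.
    by move/subsetP: Hvs => /(_ z Hz); rewrite inE.
  exists u, v; split; rewrite /isVB ?Hu ?Hv ?eqxx ?orbT //.
  rewrite /dd E1 E2 Hu Hv; lia.
Qed.

Lemma main D : k.*2 < n -> is_diameter n k D -> D = D0.
Proof.
move=> Hn HD.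
have key : forall m, (forall u v : S, isVB k u -> isVB k v -> within k u v m) <-> D0 <= m.
  move=> m; split.
  - move=> H; rewrite leqNgt; apply/negP => Hlt.
    have [u [v [Hu Hv Hd]]] := lb Hn.
    have [p [Hp Hl Hs]] := H u v Hu Hv.
    have := path_lb Hp; rewrite Hl Hd; lia.
  - move=> Hm u v Hu Hv; exact: within_mono Hm (ub Hn Hu Hv).
have h1 := HD D0; have h2 := HD D.
have a : D <= D0 by apply/h1/key.
have b : D0 <= D by apply/key/h2.
lia.
Qed.

End B.

Theorem corollary3p4 (n k D : nat) :
  4 <= n -> 1 <= k -> k.*2 < n -> is_diameter n k D ->
  (n != k.*2.+1 -> D = k.*2.+2) /\ (n = k.*2.+1 -> D = k.*2.+1).
Proof.
move=> _ _ Hn HD; have := main Hn HD; rewrite /D0 => ->.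
split.
- by move/negbTE => ->.
- by move=> ->; rewrite eqxx.
Qed.
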